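(* Let $p$ be a prime and $G$ a finite $p$-group. Then $\mathfrak{p}_{H,p}=\mathfrak{p}_{K,p}$ for all $H,K\le G$. For a prime $q\ne p$ and $H,K\le G$, $\mathfrak{p}_{H,q}=\mathfrak{p}_{K,q}$ if and only if $H$ and $K$ are conjugate in $G$.
   Context: $A(H)$ is the Burnside ring of a finite group $H$; for $I\le H$ and $r$ a prime, $\varphi^I_{H,r}\colon A(H)\to\mathbb{Z}/r\mathbb{Z}$ is the ring map $X\mapsto|X^I|\bmod r$. The Burnside $G$-Tambara functor $\underline{A}_G$ has $\underline{A}_G(G/L)=A(L)$ (with restrictions, transfers $K\times_L-$, norms $\mathrm{Map}_L(K,-)$ and conjugations). For $K\le G$ and $r$ prime, $\mathfrak{p}_{K,r}$ is the ideal with $\mathfrak{p}_{K,r}(G/L)=\bigcap_{I\le L,\ I\preccurlyeq_GK}\ker(\varphi^I_{L,r})$, where $I\preccurlyeq_GK$ means $I$ is conjugate in $G$ to a subgroup of $K$. *)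

(* Defs.v *)
From mathcomp Require Import all_boot all_order all_algebra all_fingroup all_solvable.
Set Implicit Arguments. Unset Strict Implicit. Unset Printing Implicit Defensive.
Import GRing.Theory.

Section Burnside.
Variable gT : finGroupType.

Definition mark (L J I : {set gT}) : nat :=
  #|[set C in lcosets J L | [forall i in I, (i *: C)%g == C]]|.

(* A virtual L-set  sum_{J <= L} x J [L/J]  (coefficients at J not <= L are
   ignored). Every element of the Burnside ring A(L) arises this way. *)
Definition burnside_repr := {ffun {group gT} -> int}.

(* |X^I| for the virtual L-set X represented by x (an integer). *)
Definition marks (L I : {group gT}) (x : burnside_repr) : int :=
  (\sum_(J : {group gT} | J \subset L) x J * (mark L J I)%:Z)%R.

Definition in_ker_phi (L I : {group gT}) (r : nat) (x : burnside_repr) : Prop :=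
  (r%:Z %| marks L I x)%Z.

Definition subconj (G I K : {set gT}) : Prop :=
  exists2 g, g \in G & (I :^ g \subset K)%g.

Definition in_pideal (G K : {group gT}) (r : nat) (L : {group gT})
  (x : burnside_repr) : Prop :=
  forall I : {group gT}, I \subset L -> subconj G I K -> in_ker_phi L I r x.

(* equality of the ideals p_{H,r} and p_{K,r} of the Burnside G-Tambara functor,
   i.e. equality at every level G/L, L <= G *)
Definition pideal_eq (G H K : {group gT}) (r : nat) : Prop :=
  forall L : {group gT}, L \subset G ->
    forall x : burnside_repr, in_pideal G H r L x <-> in_pideal G K r L x.

End Burnside.

(* Main.v *)
Require Import Defs.
From mathcomp Require Import all_boot all_order all_algebra all_fingroup all_solvable.
From mathcomp Require Import zify.
From Stdlib Require Import Classical_Prop.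
Set Implicit Arguments. Unset Strict Implicit. Unset Printing Implicit Defensive.
Import GRing.Theory.

Section Aux.
Variable gT : finGroupType.
Local Open Scope group_scope.

Definition linv (C : {set gT}) (a : gT) : {set gT} := (a^-1 *: C)%g.

Lemma linv1 : linv^~ 1%g =1 id.
Proof. by move=> C; rewrite /linv invg1 lcoset1. Qed.

Lemma linvM C : act_morph linv C.
Proof. by move=> a b; rewrite /linv invMg lcosetM. Qed.

Definition linv_action := TotalAction linv1 linvM.

Lemma mark_fix (L J I : {group gT}) :
  mark L J I = #|('Fix_(lcosets J L | linv_action)(I))%g|.
Proof.
rewrite /mark; apply: eq_card => C; rewrite !inE.
case: (C \in lcosets J L) => //=.
apply/forallP/subsetP => H a.
  move=> Ia; rewrite inE /linv.
  by have /implyP/(_ (groupVr Ia)) := H a^-1.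
apply/implyP => Ia; have := H a^-1 (groupVr Ia).
by rewrite inE /linv invgK.
Qed.

Lemma acts_linv (L J I : {group gT}) : I \subset L ->
  [acts I, on lcosets J L | linv_action]%g.
Proof.
move=> sIL; apply/subsetP => a Ia; rewrite !inE; apply/subsetP => C /=.
rewrite inE /= /linv => /imsetP [x Lx ->].
apply/imsetP; exists (a^-1 * x)%g; last by rewrite !lcosetE lcosetM.
by rewrite groupM // groupV (subsetP sIL).
Qed.

Lemma mark_mod (L J I : {group gT}) (p : nat) : p.-group I -> I \subset L ->
  mark L J I = mark L J 1 %[mod p].
Proof.
move=> pI sIL; rewrite !mark_fix.
rewrite -(pgroup_fix_mod pI (acts_linv J sIL)).
rewrite (pgroup_fix_mod (pgroup1 gT p) (acts_linv J (sub1G L))) //.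
Qed.


Lemma marks_mod (L I : {group gT}) (p : nat) x : p.-group I -> I \subset L ->
  (p%:Z %| marks L I x)%Z = (p%:Z %| marks L 1%G x)%Z.
Proof.
move=> pI sIL.
have D : (p%:Z %| (marks L I x - marks L 1%G x)%R)%Z.
  rewrite /marks -sumrB; apply: rpred_sum => J _; rewrite -mulrBr.
  apply: dvdz_mull; rewrite -eqz_mod_dvd; apply/eqP; rewrite !modz_nat.
  by rewrite (mark_mod J pI sIL).
have -> : marks L I x = ((marks L I x - marks L 1%G x) + marks L 1%G x)%R.
  by rewrite subrK.
by rewrite rpredDl.
Qed.

Lemma in_pideal_p (G K L : {group gT}) (p : nat) x : p.-group G -> L \subset G ->
  in_pideal G K p L x <-> (p%:Z %| marks L 1%G x)%Z.
Proof.
move=> pG sLG; split.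
  move=> H; apply: H; first exact: sub1G.
  by exists 1; rewrite ?group1 // conjs1g sub1G.
move=> D I sIL _; rewrite /in_ker_phi marks_mod //.
exact: pgroupS (subset_trans sIL sLG) pG.
Qed.

Lemma part1 (G H K : {group gT}) (p : nat) : p.-group G -> pideal_eq G H K p.
Proof.
move=> pG L sLG x.
by split=> /(in_pideal_p _ x pG sLG) D; apply/(in_pideal_p _ x pG sLG).
Qed.


Lemma cond_iff (J I : {group gT}) k :
  [forall i in I, i *: (k *: J) == k *: J] = (I :^ k \subset J).
Proof.
rewrite sub_conjg; apply/forallP/subsetP => H i.
  move=> Ii; move: (H i); rewrite Ii /= => /eqP; rewrite -lcosetM => /lcoset_eqP.
  by rewrite mem_lcoset mem_conjgV conjgE !mulgA.
apply/implyP => Ii; apply/eqP; rewrite -lcosetM; apply/lcoset_eqP.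
by have := H i Ii; rewrite mem_lcoset mem_conjgV conjgE !mulgA.
Qed.

Lemma card_mark (L J I : {group gT}) : J \subset L ->
  (#|J| * mark L J I)%N = #|[set k in L | I :^ k \subset J]|.
Proof.
move=> sJL; rewrite -[#|[set k in L | _]|]sum1_card.
rewrite (eq_bigl (fun k => (k \in L) && (I :^ k \subset J))); last first.
  by move=> k; rewrite inE.
set F := [set C in lcosets J L | [forall i in I, i *: C == C]].
rewrite (partition_big (fun k => k *: J) (mem F)); last first.
  move=> k /andP [Lk sIk]; change (k *: J \in F); rewrite /F inE cond_iff sIk andbT.
  by apply/imsetP; exists k; rewrite ?lcosetE.
rewrite /mark -/F.
transitivity (\sum_(C in F) #|J|); first by rewrite sum_nat_const mulnC.
apply: eq_bigr => C; rewrite inE => /andP [/imsetP [y Ly ->]].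
rewrite lcosetE => FC.
rewrite -(card_lcoset J y) -sum1_card; apply: eq_bigl => k.
apply/idP/idP; last first.
  by move=> /andP [_ /eqP /lcoset_eqP].
move=> kyJ; have /lcoset_eqP E := kyJ; rewrite E eqxx andbT.
have Lk : k \in L.
  move: kyJ; rewrite mem_lcoset => /(subsetP sJL) H.
  by rewrite -(mulKVg y k) groupM.
by rewrite Lk /= -cond_iff E.
Qed.


Definition Pm (K : {group gT}) (n : nat) (m : {group gT} -> int) :=
  forall A : {group gT}, A \subset K -> (n <= #|A|)%N ->
    (\sum_(J : {group gT} | (J \subset K) && (A \subset J)) m J)%R = ((A :==: K)%:R)%R.

Lemma proper_grp (A J : {group gT}) : A \subset J -> J != A -> (#|A| < #|J|)%N.
Proof.
move=> sAJ neJA; rewrite ltnNge; apply/negP => le; move/negP: neJA; apply.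
have /eqP E : (A :==: J) by rewrite eqEcard sAJ le.
by apply/eqP; apply: val_inj.
Qed.

Lemma Pm_step K n m : Pm K n.+1 m -> exists m', Pm K n m'.
Proof.
move=> Hm.
pose m' := fun A : {group gT} => if #|A| == n then
   (((A :==: K)%:R)%R - \sum_(J : {group gT} | ((J \subset K) && (A \subset J)) && (J != A)) m J)%R
   else m A.
exists m' => A sAK leA.
have E : forall J : {group gT}, A \subset J -> (n < #|J|)%N -> m' J = m J.
  by move=> J _ lt; rewrite /m' gtn_eqF.
case: (eqVneq #|A| n) => eA.
  rewrite (bigD1 A) /=; last by rewrite sAK subxx.
  rewrite {1}/m' eA eqxx.
  rewrite (eq_bigr m); first by rewrite subrK.
  move=> J /andP [/andP [_ sAJ] neJA]; apply: E => //.
  by rewrite -eA proper_grp.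
have lt : (n < #|A|)%N by rewrite ltn_neqAle eq_sym eA leA.
rewrite -(Hm A sAK lt); apply: eq_bigr => J /andP [_ sAJ]; apply: E => //.
exact: leq_trans lt (subset_leq_card sAJ).
Qed.

Lemma Pm_mono K n n' m : (n <= n')%N -> Pm K n m -> Pm K n' m.
Proof. by move=> le H A sAK le'; apply: H => //; apply: leq_trans le le'. Qed.

Lemma mobius_exists (K : {group gT}) : exists m, Pm K 0 m.
Proof.
have base : Pm K #|K|.+1 (fun _ => 0%R).
  by move=> A sAK; rewrite ltnNge subset_leq_card.
suff H : forall k, exists m, Pm K (#|K|.+1 - k) m.
  by have [m Hm] := H #|K|.+1; exists m; rewrite subnn in Hm.
elim=> [|k [m Hm]]; first by exists (fun _ => 0%R); rewrite subn0.
apply: Pm_step; apply: Pm_mono Hm; lia.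
Qed.


Lemma marks_ex (K I : {group gT}) m : Pm K 0 m -> I \subset K ->
  marks K I [ffun J : {group gT} => (#|J|%:Z * m J)%R] = Posz (#|K| * (I :==: K)).
Proof.
move=> Hm sIK; rewrite /marks.
transitivity (\sum_(J : {group gT} | J \subset K) \sum_(k in K) (m J * (I :^ k \subset J)%:R))%R.
  apply: eq_bigr => J sJK; rewrite ffunE (mulrC _ (m J)) -mulrA -PoszM card_mark //.
  rewrite -mulr_sumr; congr (_ * _)%R.
  rewrite -sum1_card (big_morph Posz PoszD (erefl _)) big_mkcond [RHS]big_mkcond /=.
  by apply: eq_bigr => k _; rewrite inE; case: (k \in K); case: (_ \subset _).
rewrite exchange_big /=.
transitivity (\sum_(k in K) (((I :==: K) : nat)%:R : int))%R.
  apply: eq_bigr => k Kk.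
  have sIkK : (I :^ k)%G \subset K by rewrite /= -(conjGid Kk) conjSg.
  have := Hm _ sIkK (leq0n _) => /= H.
  transitivity (\sum_(J : {group gT} | (J \subset K) && ((I :^ k)%G \subset J)) m J)%R.
    rewrite big_mkcondr; apply: eq_bigr => J _ /=.
    by case: (_ \subset _); rewrite ?mulr1 ?mulr0.
  rewrite H /= -{1}(conjGid Kk); congr (_%:R)%R; congr (nat_of_bool _).
  by apply/eqP/eqP => [/conjsg_inj|->].
by rewrite sumr_const -mulrnA natz mulnC.
Qed.


Lemma subconj_conj (G : {group gT}) (I H K : {set gT}) g :
  g \in G -> H :^ g = K -> subconj G I H -> subconj G I K.
Proof.
move=> Gg E [h Gh sIh]; exists (h * g); first by rewrite groupM.
by rewrite conjsgM -E conjSg.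
Qed.

Lemma pideal_conj (G H K : {group gT}) q g :
  g \in G -> H :^ g = K -> pideal_eq G H K q.
Proof.
move=> Gg E L sLG x; split => P I sIL sc; apply: P => //.
  apply: (subconj_conj (groupVr Gg) _ sc); by rewrite -E conjsgK.
exact: subconj_conj Gg E sc.
Qed.

Lemma pideal_sym (G H K : {group gT}) q : pideal_eq G H K q -> pideal_eq G K H q.
Proof. by move=> E L sLG x; split => /(E L sLG x). Qed.

Lemma pideal_subconj (G H K : {group gT}) (p q : nat) :
  p.-group G -> prime q -> q != p -> K \subset G ->
  pideal_eq G H K q -> subconj G K H.
Proof.
move=> pG pq qp sKG E.
case: (Classical_Prop.classic (subconj G K H)) => // nsc; exfalso.
have [m Hm] := mobius_exists K.
pose x : burnside_repr gT := [ffun J : {group gT} => (#|J|%:Z * m J)%R].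
have inH : in_pideal G H q K x.
  move=> I sIK scI; rewrite /in_ker_phi /x marks_ex //.
  have -> : (I :==: K) = false.
    apply/negP => /eqP eIK; apply: nsc; by rewrite -eIK.
  by rewrite muln0 dvdz0.
have := (E K sKG x).1 inH K (subxx _).
have scKK : subconj G K K by exists 1; rewrite ?group1 // conjsg1 subxx.
move=> /(_ scKK); rewrite /in_ker_phi /x marks_ex // eqxx muln1 dvdzE /= => D.
have pK : p.-group K := pgroupS sKG pG.
have := pgroupP pK q pq D; rewrite inE => /eqP eqp.
by rewrite eqp eqxx in qp.
Qed.

End Aux.

Unset Implicit Arguments.

Theorem corollary4p17 (gT : finGroupType) (G : {group gT}) (p : nat) :
  prime p -> (p.-group G)%g ->
  (forall H K : {group gT}, H \subset G -> K \subset G -> pideal_eq G H K p) /\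
  (forall q : nat, prime q -> q != p ->
     forall H K : {group gT}, H \subset G -> K \subset G ->
       (pideal_eq G H K q <-> exists2 g, g \in G & (H :^ g)%g = K)).
Proof.
move=> pp pG; split.
  by move=> H K _ _; apply: part1.
move=> q pq qp H K sHG sKG; split.
  move=> E.
  have [g Gg sg] := pideal_subconj pG pq qp sKG E.
  have [h Gh sh] := pideal_subconj pG pq qp sHG (pideal_sym E).
  exists h => //; apply/eqP; rewrite eqEcard sh cardJg.
  by rewrite -(cardJg K g) subset_leq_card.
by move=> [g Gg E]; apply: pideal_conj Gg E.
Qed.
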